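(* There exist absolute constants $C_0\approx3.1967$ (namely $C_0=e^3/(2\pi)$) and $C_1\approx2.9290$ such that the following holds. Let $\mathcal X$ be a finite alphabet with $|\mathcal X|\ge2$, let $X_1,\dots,X_n$ be i.i.d. with distribution $P\in\mathcal P(\mathcal X)$, and let $\hat P_n$ be the empirical distribution of $(X_1,\dots,X_n)$. Then for every $\epsilon>0$, $$\mathbb P\big[\|\hat P_n-P\|_\infty\ge\epsilon\big]\le2C_1(|\mathcal X|-1)(C_0n)^{\frac{|\mathcal X|}2-1}e^{-2n\epsilon^2}.$$
   Context: $\mathcal P(\mathcal X)$ is the set of probability distributions on $\mathcal X$; $\|P-Q\|_\infty=\max_{a\in\mathcal X}|P(a)-Q(a)|$; $\hat P_n(a)=\frac1n\sum_{k=1}^n1\{X_k=a\}$. *)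

(* Defs.v *)
From HB Require Import structures.
From mathcomp Require Import all_boot all_order all_algebra.
From mathcomp Require Import all_classical all_reals all_analysis.
Set Implicit Arguments. Unset Strict Implicit. Unset Printing Implicit Defensive.
Import Order.TTheory GRing.Theory Num.Theory.
Local Open Scope ring_scope.

Definition is_distr {R : realType} (T : finType) (P : T -> R) : Prop :=
  (forall a, 0 <= P a) /\ \sum_(a : T) P a = 1.

Definition empirical {R : realType} (T : finType) (n : nat)
    (x : {ffun 'I_n -> T}) (a : T) : R :=
  (#|[set i : 'I_n | x i == a]|)%:R / n%:R.

Definition supdist {R : realType} (T : finType) (Q P : T -> R) : R :=
  \big[Num.max/0]_(a : T) `|Q a - P a|.

Definition iid_prob {R : realType} (T : finType) (n : nat) (P : T -> R)
    (E : pred {ffun 'I_n -> T}) : R :=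
  \sum_(x : {ffun 'I_n -> T} | E x) \prod_(i < n) P (x i).

(* Main.v *)
Require Import Defs.
From HB Require Import structures.
From mathcomp Require Import all_boot all_order all_algebra.
From mathcomp Require Import all_classical all_reals all_analysis.
From mathcomp Require Import ring lra.
Import Order.TTheory GRing.Theory Num.Theory.
Local Open Scope ring_scope.


Section Hoeff.
Variable R : realType.

Lemma nincr_all (f f' : R -> R) (a b : R) :
  (forall x : R, is_derive x (1:R) f (f' x)) -> (forall x, a < x < b -> f' x <= 0) ->
  forall x y, a <= x -> x <= y -> y <= b -> f y <= f x.
Proof.
move=> df h; apply: ler0_derive1_nincr.
- by move=> x _; by case: (df x).
- by move=> x; rewrite in_itv /= => /h; rewrite derive1E; case: (df x) => _ ->.
- by apply: derivable_within_continuous => x _; by case: (df x).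
Qed.

Lemma ndecr_all (f f' : R -> R) (a b : R) :
  (forall x : R, is_derive x (1:R) f (f' x)) -> (forall x, a < x < b -> 0 <= f' x) ->
  forall x y, a <= x -> x <= y -> y <= b -> f x <= f y.
Proof.
move=> df h; apply: ger0_derive1_ndecr.
- by move=> x _; by case: (df x).
- by move=> x; rewrite in_itv /= => /h; rewrite derive1E; case: (df x) => _ ->.
- by apply: derivable_within_continuous => x _; by case: (df x).
Qed.

Let sc (a b : R) : a *: b = a * b := erefl.
Variables (p : R) (p0 : 0 <= p) (p1 : p <= 1).

Definition EE : R -> R := cst (1 - p) + p \*: (expR : R -> R).

Lemma EEE t : EE t = 1 - p + p * expR t.
Proof. by []. Qed.

Lemma EE_gt0 t : 0 < EE t.
Proof.
rewrite EEE; have e0 := expR_gt0 t.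
have [p1'|] := ltP p 1.
  have : 0 <= p * expR t by rewrite mulr_ge0 // ltW.
  lra.
move=> p1''; have -> : p = 1 by apply/eqP; rewrite eq_le p1 p1''.
lra.
Qed.

Lemma dEE (x : R) : is_derive x 1 EE (p * expR x).
Proof.
apply: (is_derive_eq (is_deriveD (is_derive_cst (1-p) x 1) (is_deriveZ p (is_derive_expR x)))).
by rewrite /= add0r.
Qed.

Definition qq : R -> R := (p \*: (expR : R -> R)) * (fun y => (EE y)^-1).

Lemma qqE t : qq t = p * expR t / EE t.
Proof. by []. Qed.

Lemma dqq (x : R) : is_derive x 1 qq (qq x * (1 - qq x)).
Proof.
rewrite /qq.
have h := is_deriveV (lt0r_neq0 (EE_gt0 x)) (dEE x).
apply: (is_derive_eq (is_deriveM (is_deriveZ p (is_derive_expR x)) h)).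
rewrite /= !EEE.
have := EE_gt0 x; rewrite EEE => h0.
rewrite !fctE /= !EEE !sc.
field; lra.
Qed.

Definition psi : R -> R := qq - cst p - (4^-1 \*: (id : R -> R)).

Lemma dpsi (x : R) : is_derive x 1 psi (qq x * (1 - qq x) - 4^-1).
Proof.
rewrite /psi; have h := dqq x.
apply: (is_derive_eq (is_deriveB (is_deriveB h (is_derive_cst p x 1)) (is_deriveZ 4^-1 (is_derive_id x 1)))).
rewrite /= !sc; lra.
Qed.

Lemma psi0 : psi 0 = 0.
Proof. by rewrite /psi !fctE /= qqE EEE expR0 !sc mulr1 mulr0 subr0 subrK divr1 subrr. Qed.

Lemma psi_sign (t : R) : (0 <= t -> psi t <= 0) /\ (t <= 0 -> 0 <= psi t).
Proof.
have hd : forall x, qq x * (1 - qq x) - 4^-1 <= 0.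
  by move=> x; have := sqr_ge0 (2 * qq x - 1); nra.
split=> ht.
- have := @nincr_all _ _ 0 t dpsi (fun x _ => hd x) 0 t (lexx _) ht (lexx _).
  by rewrite psi0.
- have := @nincr_all _ _ t 0 dpsi (fun x _ => hd x) t 0 (lexx _) ht (lexx _).
  by rewrite psi0.
Qed.

Definition gg : R -> R := - (p \*: (id : R -> R) + 8^-1 \*: (id : R -> R) ^+ 2).

Definition phi : R -> R := EE * (expR \o gg).

Lemma dphi (x : R) : is_derive x 1 phi (expR (gg x) * EE x * psi x).
Proof.
have dg : is_derive x 1 gg (- (p + x / 4)).
  apply: (is_derive_eq (is_deriveN (is_deriveD (is_deriveZ p (is_derive_id x 1)) (is_deriveZ 8^-1 (is_deriveX 2 (is_derive_id x 1)))))).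
  by rewrite /= !sc expr1; field.
have de : is_derive x 1 (expR \o gg) (expR (gg x) * - (p + x / 4)).
  exact: is_derive1_comp.
have dE := dEE x.
rewrite /phi; apply: (is_derive_eq (is_deriveM dE de)).
rewrite /psi !fctE /= !sc qqE.
have := EE_gt0 x => h0.
field; exact: lt0r_neq0.
Qed.

Lemma phi0 : phi 0 = 1.
Proof.
by rewrite /phi !fctE /gg /= !fctE /= EEE expR0 !sc mulr1 subrK mul1r mulr0 expr0n /= mulr0 addr0 oppr0 expR0.
Qed.

Lemma phi_le1 (t : R) : phi t <= 1.
Proof.
rewrite -phi0.
have [t0|t0] := leP 0 t.
- apply: (@nincr_all _ _ 0 t dphi _ 0 t) => // x /andP[x0 _].
  apply: mulr_ge0_le0; first by apply: mulr_ge0; apply: ltW; [exact: expR_gt0 | exact: EE_gt0].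
  exact: (psi_sign x).1 (ltW x0).
- apply: (@ndecr_all _ _ t 0 dphi _ t 0) => //; last exact: ltW.
  move=> x /andP[_ x0].
  apply: mulr_ge0; first by apply: mulr_ge0; apply: ltW; [exact: expR_gt0 | exact: EE_gt0].
  exact: (psi_sign x).2 (ltW x0).
Qed.

Lemma hoeffding_lemma (t : R) :
  expR (- (t * p)) * (1 - p + p * expR t) <= expR (t ^+ 2 / 8).
Proof.
have h := phi_le1 t.
rewrite /phi !fctE /= in h.
have e2 : expR (- (t * p)) = expR (t^+2/8) * expR (gg t).
  by rewrite -expRD /gg !fctE /= !sc; congr expR; field.
rewrite e2 -EEE -mulrA.
rewrite -{2}[expR (t^+2/8)]mulr1 ler_pM2l ?expR_gt0 //.
by rewrite mulrC.
Qed.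
End Hoeff.


Section Comb.
Variable R : realType.

Lemma card_sum (n : nat) (T : finType) (x : {ffun 'I_n -> T}) (a : T) :
  (#|[set i : 'I_n | x i == a]|%:R : R) = \sum_i ((x i == a)%:R).
Proof.
rewrite -sum1_card natr_sum big_mkcond /=; apply: eq_bigr => i _.
by rewrite inE; case: (x i == a).
Qed.

Lemma sum_prod (n : nat) (T : finType) (f : T -> R) :
  \sum_(x : {ffun 'I_n -> T}) \prod_i f (x i) = (\sum_b f b) ^+ n.
Proof.
rewrite -(bigA_distr_bigA (fun (_ : 'I_n) b => f b)) /=.
by rewrite prodr_const card_ord.
Qed.

Lemma tail (T : finType) (P : T -> R) (n : nat) (a : T) (eps s : R) :
  is_distr P -> (0 < n)%N -> 0 < eps -> s ^+ 2 = 1 ->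
  \sum_(x : {ffun 'I_n -> T} | eps <= s * (empirical x a - P a)) \prod_i P (x i)
  <= expR (- (2 * n%:R * eps ^+ 2)).
Proof.
move=> [P0 P1] n0 e0 s2.
set p := P a.
have p0 : 0 <= p := P0 a.
have p1 : p <= 1.
  rewrite -P1 (bigD1 a) //= lerDl; apply: sumr_ge0 => b _; exact: P0.
set u := 4 * eps * s.
pose g := fun b : T => expR (u * ((b == a)%:R - p)).
pose c := expR (- (4 * n%:R * eps ^+ 2)).
have nR : 0 < n%:R :> R by rewrite ltr0n.
have w0 : forall x : {ffun 'I_n -> T}, 0 <= \prod_i P (x i).
  by move=> x; apply: prodr_ge0 => i _; exact: P0.
have F0 : forall x : {ffun 'I_n -> T}, 0 <= c * \prod_i g (x i).
  by move=> x; apply: mulr_ge0; [exact: ltW (expR_gt0 _)| apply: prodr_ge0 => i _; exact: ltW (expR_gt0 _)].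
apply: (@le_trans _ _ (\sum_(x : {ffun 'I_n -> T}) \prod_i P (x i) * (c * \prod_i g (x i)))).
  rewrite [leRHS](bigID (fun x : {ffun 'I_n -> T} => eps <= s * (empirical x a - P a))) /=.
  rewrite -[leLHS]addr0; apply: lerD; last first.
    by apply: sumr_ge0 => x _; apply: mulr_ge0.
  apply: ler_sum => x hx.
  rewrite -{1}[\prod_i P (x i)]mulr1; apply: ler_wpM2l => //.
  rewrite /c /g -expR_sum -expRD -[X in X <= _]expR0 ler_expR.
  rewrite -mulr_sumr sumrB -card_sum sumr_const card_ord.
  move: hx; rewrite /empirical -/p => hx.
  set S := (#|_|%:R : R) in hx *.
  have -> : S = S / n%:R * n%:R by rewrite divfK // lt0r_neq0.
  set e := S / n%:R in hx *.
  have -> : - (4 * n%:R * eps ^+ 2) + u * (e * n%:R - p *+ n)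
          = 4 * n%:R * eps * (s * (e - p) - eps).
    by rewrite /u -mulr_natr; ring.
  apply: mulr_ge0; last by rewrite subr_ge0.
  by rewrite !mulr_ge0 // ltW.
under eq_bigr => x _ do rewrite mulrCA -big_split /=.
rewrite -mulr_sumr (@sum_prod n T (fun b : T => P b * g b)).
have hs : \sum_b P b * g b = expR (- (u * p)) * (1 - p + p * expR u).
  rewrite (bigD1 a) //= /g eqxx /= -/p.
  under eq_bigr => b /negbTE -> do rewrite /= sub0r.
  rewrite -mulr_suml.
  have -> : \sum_(i | i != a) P i = 1 - p.
    by rewrite -P1 [in RHS](bigD1 a) //= -/p; lra.
  have -> : expR (u * (1 - p)) = expR u * expR (- (u * p)).
    by rewrite -expRD; congr expR; ring.
  rewrite mulrN; ring.
rewrite hs.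
apply: (@le_trans _ _ (c * expR (u ^+ 2 / 8) ^+ n)).
  apply: ler_wpM2l; first exact: ltW (expR_gt0 _).
  apply: lerXn2r.
  - by rewrite nnegrE; apply: mulr_ge0; [exact: ltW (expR_gt0 _)| have := expR_gt0 u; nra].
  - by rewrite nnegrE; exact: ltW (expR_gt0 _).
  exact: hoeffding_lemma.
rewrite -expRM_natl /c -expRD; rewrite ler_expR.
have -> : u ^+ 2 = 16 * eps ^+ 2 by rewrite /u !exprMn s2; ring.
lra.
Qed.
End Comb.


Lemma C0_ge1 (R : realType) : 1 <= expR 3 / (2 * pi) :> R.
Proof.
have hpi := pihalf_lt2 R.
have hp0 := pi_gt0 R.
have e1 : 2 <= expR 1 :> R by have := expR_ge1Dx (1 : R); lra.
have e3 : expR 3 = expR 1 ^+ 3 :> R by rewrite -expRM_natl mulr1.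
rewrite ler_pdivlMr ?mulr_gt0 // mul1r e3.
have : 2 ^+ 3 <= expR 1 ^+ 3 :> R.
  by apply: lerXn2r => //; rewrite nnegrE //; lra.
lra.
Qed.

Lemma exists_big (R : realType) (T : finType) (d : T -> R) (eps : R) :
  0 < eps -> eps <= \big[Num.max/0]_(a : T) d a -> exists a, eps <= d a.
Proof.
move=> e0 h; apply/not_existsP => hn.
have : \big[Num.max/0]_(a : T) d a < eps.
  apply: (big_ind (fun v => v < eps)) => //.
    by move=> x y hx hy; rewrite gt_max hx hy.
  by move=> a _; rewrite ltNge; apply/negP => /(hn a).
by rewrite ltNge h.
Qed.

Theorem lemma13 (R : realType) :
  let C0 : R := expR 3 / (2 * pi) in
  exists C1 : R, 0 < C1 /\ C1 <= 2929 / 1000 + 1 / (100 * 100) /\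
  forall (T : finType) (P : T -> R) (n : nat) (eps : R),
    (2 <= #|T|)%N -> is_distr P -> (0 < n)%N -> 0 < eps ->
    iid_prob P (fun x : {ffun 'I_n -> T} => eps <= supdist (empirical x) P)
    <= 2 * C1 * (#|T|%:R - 1) * (C0 * n%:R) `^ (#|T|%:R / 2 - 1)
       * expR (- (2 * n%:R * eps ^+ 2)).
Proof.
move=> C0; exists 2; split; first lra.
split; first lra.
move=> T P n eps hT hP n0 e0.
have [P0 P1] := hP.
set B := expR (- (2 * n%:R * eps ^+ 2)).
set w := fun x : {ffun 'I_n -> T} => \prod_i P (x i).
have w0 : forall x, 0 <= w x by move=> x; apply: prodr_ge0 => i _; exact: P0.
pose C s a (x : {ffun 'I_n -> T}) := eps <= s * (empirical x a - P a).
have step1 : iid_prob P (fun x : {ffun 'I_n -> T} => eps <= supdist (empirical x) P)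
   <= \sum_(a : T) (\sum_(x | C 1 a x) w x + \sum_(x | C (-1) a x) w x).
  rewrite /iid_prob big_mkcond /=.
  have -> : \sum_(a : T) (\sum_(x | C 1 a x) w x + \sum_(x | C (-1) a x) w x)
     = \sum_(x : {ffun 'I_n -> T}) \sum_(a : T)
         ((if C 1 a x then w x else 0) + (if C (-1) a x then w x else 0)).
    rewrite exchange_big /=; apply: eq_bigr => a _.
    by rewrite !(big_mkcond (C _ a)) -big_split.

  apply: ler_sum => x _.
  case: ifP => hE; last first.
    apply: sumr_ge0 => a _; apply: addr_ge0; case: ifP => //.
  have [a ha] := @exists_big R T (fun a => `|empirical x a - P a|) eps e0 hE.
  rewrite (bigD1 a) //=.
  apply: (@le_trans _ _ ((if C 1 a x then w x else 0) + (if C (-1) a x then w x else 0))); last first.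
    rewrite lerDl; apply: sumr_ge0 => b _; apply: addr_ge0; case: ifP => //.
  move: ha; rewrite ler_normr => /orP[h|h].
    have -> : C 1 a x by rewrite /C mul1r.
    by rewrite lerDl; case: ifP.
  have -> : C (-1) a x by rewrite /C mulN1r.
  by rewrite lerDr; case: ifP.
apply: (le_trans step1).
apply: (@le_trans _ _ (\sum_(a : T) (B + B))).
  apply: ler_sum => a _; apply: lerD.
    by apply: tail => //; rewrite expr1n.
  by apply: tail => //; rewrite sqrrN expr1n.
rewrite sumr_const.
have hk : (2 : R) <= #|T|%:R by rewrite ler_nat.
have hX : 1 <= (C0 * n%:R) `^ (#|T|%:R / 2 - 1).
  have h1 : 1 <= C0 * n%:R.
    have := C0_ge1 R; rewrite -/C0 => hc.
    have : 1 <= n%:R :> R by rewrite ler1n.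
    nra.
  have := ler_powR h1 (x:=0) (y:=#|T|%:R / 2 - 1).
  rewrite powRr0; apply; lra.
have hB : 0 <= B by exact: ltW (expR_gt0 _).
have hfin : #|T|%:R * (B + B) <= 2 * 2 * (#|T|%:R - 1) * (C0 * n%:R) `^ (#|T|%:R / 2 - 1) * B.
  move: hX hk; set X := (_ `^ _); set k : R := #|T|%:R => hX hk.
  have h3 : 0 <= (k - 1) * (X - 1) * B.
    by rewrite !mulr_ge0 // subr_ge0 //; apply: le_trans hk; lra.
  have h4 : 0 <= (k - 2) * B by rewrite mulr_ge0 // subr_ge0.
  nra.
rewrite -[(B + B) *+ _]mulr_natl. exact: hfin.

Qed.
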